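(* Let $J=(a,b)\subseteq\mathbb R$ be an open interval (possibly unbounded) and let $A:J\to\mathbb R$ be differentiable with $|A'(x)-A'(y)|\le M|x-y|$ for all $x,y\in J$, for some constant $M>0$. Then $c^2(\mathbf z)\le 8M^2$ for every three-tuple $\mathbf z$ of distinct points on $\Gamma=\{x+iA(x):x\in J\}$.
   Context: The Menger curvature $c(\mathbf z)$ of three points $z_1,z_2,z_3\in\mathbb C$ is $0$ if they are collinear and otherwise the reciprocal of the radius of the unique circle through them. *)

(* Defs.v *)
From Stdlib Require Import Reals ClassicalEpsilon.
From Coquelicot Require Import Coquelicot.
Open Scope R_scope.

Definition collinear (z1 z2 z3 : C) : Prop :=
  exists (p d : C), d <> 0%C /\
    (exists t : R, z1 = (p + RtoC t * d)%C) /\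
    (exists t : R, z2 = (p + RtoC t * d)%C) /\
    (exists t : R, z3 = (p + RtoC t * d)%C).

Definition is_circumradius (z1 z2 z3 : C) (r : R) : Prop :=
  exists w : C, Cmod (z1 - w) = r /\ Cmod (z2 - w) = r /\ Cmod (z3 - w) = r.

Definition circumradius (z1 z2 z3 : C) : R :=
  epsilon (inhabits 0) (is_circumradius z1 z2 z3).

Definition menger_curvature (z1 z2 z3 : C) : R :=
  match excluded_middle_informative (collinear z1 z2 z3) with
  | left _ => 0
  | right _ => / circumradius z1 z2 z3
  end.

Definition in_open_interval (a b : Rbar) (x : R) : Prop :=
  Rbar_lt a x /\ Rbar_lt x b.

(* Main.v *)
Require Import Defs.
From Stdlib Require Import Reals Lra Psatz ClassicalEpsilon.
From Coquelicot Require Import Coquelicot.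
Open Scope R_scope.

Lemma interval_convex (a b : Rbar) x y z :
  in_open_interval a b x -> in_open_interval a b z -> x <= y <= z ->
  in_open_interval a b y.
Proof.
  unfold in_open_interval; destruct a, b; simpl; intuition lra.
Qed.

Lemma mvt_J (a b : Rbar) (A : R -> R) :
  (forall x, in_open_interval a b x -> ex_derive A x) ->
  forall x1 x2, in_open_interval a b x1 -> in_open_interval a b x2 -> x1 < x2 ->
  exists c, x1 <= c <= x2 /\ A x2 - A x1 = Derive A c * (x2 - x1).
Proof.
  intros HD x1 x2 H1 H2 Hlt.
  destruct (MVT_gen A x1 x2 (Derive A)) as [c [Hc He]].
  - intros x Hx. apply Derive_correct, HD.
    rewrite Rmin_left in Hx by lra. rewrite Rmax_right in Hx by lra.
    apply (interval_convex a b x1 x x2); auto; lra.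
  - intros x Hx. apply continuity_pt_filterlim. apply (ex_derive_continuous (K:=R_AbsRing) (V:=R_NormedModule)). apply HD.
    rewrite Rmin_left in Hx by lra. rewrite Rmax_right in Hx by lra.
    apply (interval_convex a b x1 x x2); auto; lra.
  - exists c. rewrite Rmin_left in Hc by lra. rewrite Rmax_right in Hc by lra.
    split; auto.
Qed.

Definition DD x1 x2 x3 y1 y2 y3 := (x2-x1)*(y3-y1) - (x3-x1)*(y2-y1).
Definition QQ x1 x2 x3 := ((x2-x1)*(x3-x1)*(x3-x2))^2.

Lemma ordered_bound (a b : Rbar) (A : R -> R) (M : R) :
  0 < M ->
  (forall x, in_open_interval a b x -> ex_derive A x) ->
  (forall x y, in_open_interval a b x -> in_open_interval a b y ->
     Rabs (Derive A x - Derive A y) <= M * Rabs (x - y)) ->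
  forall x1 x2 x3, in_open_interval a b x1 -> in_open_interval a b x2 ->
   in_open_interval a b x3 -> x1 < x2 -> x2 < x3 ->
   (DD x1 x2 x3 (A x1) (A x2) (A x3))^2 <= M^2 * QQ x1 x2 x3.
Proof.
  intros HM HD HL x1 x2 x3 H1 H2 H3 l12 l23.
  destruct (mvt_J a b A HD x1 x2 H1 H2 l12) as [c [Hc Ec]].
  destruct (mvt_J a b A HD x2 x3 H2 H3 l23) as [e [He Ee]].
  assert (Jc : in_open_interval a b c) by (apply (interval_convex a b x1 c x2); auto).
  assert (Je : in_open_interval a b e) by (apply (interval_convex a b x2 e x3); auto).
  specialize (HL e c Je Jc).
  assert (HDe : DD x1 x2 x3 (A x1) (A x2) (A x3) =
     (x2-x1)*(x3-x2)*(Derive A e - Derive A c)).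
  { unfold DD. replace (A x3 - A x1) with ((A x3 - A x2) + (A x2 - A x1)) by ring.
    rewrite Ee, Ec. ring. }
  rewrite HDe. unfold QQ.
  rewrite (Rabs_right (e - c)) in HL by lra.
  set (s := Derive A e - Derive A c) in *.
  assert (Hs : s^2 <= M^2 * (x3-x1)^2).
  { assert (0 <= x3 - x1) by lra. assert (Rabs s ^ 2 <= (M*(x3-x1))^2) by (apply pow_incr; split; [apply Rabs_pos|nra]). rewrite RPow_abs in H0. rewrite Rabs_right in H0 by (apply Rle_ge, pow2_ge_0). nra. }
  assert (0 <= ((x2-x1)*(x3-x2))^2) by apply pow2_ge_0.
  replace (((x2 - x1) * (x3 - x2) * s) ^ 2) with (((x2-x1)*(x3-x2))^2 * s^2) by ring.
  replace (M ^ 2 * ((x2 - x1) * (x3 - x1) * (x3 - x2)) ^ 2) with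
    (((x2-x1)*(x3-x2))^2 * (M^2 * (x3-x1)^2)) by ring.
  apply Rmult_le_compat_l; auto.
Qed.

Ltac fin H := unfold DD, QQ in *;
  eapply Rle_trans; [apply Req_le|eapply Rle_trans; [exact H| apply Req_le]]; ring.

Lemma all_bound (a b : Rbar) (A : R -> R) (M : R) :
  0 < M ->
  (forall x, in_open_interval a b x -> ex_derive A x) ->
  (forall x y, in_open_interval a b x -> in_open_interval a b y ->
     Rabs (Derive A x - Derive A y) <= M * Rabs (x - y)) ->
  forall x1 x2 x3, in_open_interval a b x1 -> in_open_interval a b x2 ->
   in_open_interval a b x3 -> x1 <> x2 -> x1 <> x3 -> x2 <> x3 ->
   (DD x1 x2 x3 (A x1) (A x2) (A x3))^2 <= M^2 * QQ x1 x2 x3.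
Proof.
  intros HM HD HL x1 x2 x3 H1 H2 H3 n12 n13 n23.
  pose proof (ordered_bound a b A M HM HD HL) as OB.
  destruct (Rlt_or_le x1 x2); destruct (Rlt_or_le x2 x3); destruct (Rlt_or_le x1 x3).
  - apply OB; auto.
  - lra.
  - assert (HH := OB x1 x3 x2 H1 H3 H2 ltac:(lra) ltac:(lra)). fin HH.
  - assert (HH := OB x3 x1 x2 H3 H1 H2 ltac:(lra) ltac:(lra)). fin HH.
  - assert (HH := OB x2 x1 x3 H2 H1 H3 ltac:(lra) ltac:(lra)). fin HH.
  - assert (HH := OB x2 x3 x1 H2 H3 H1 ltac:(lra) ltac:(lra)). fin HH.
  - lra.
  - assert (HH := OB x3 x2 x1 H3 H2 H1 ltac:(lra) ltac:(lra)). fin HH.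
Qed.

Lemma circle_alg x1 x2 x3 y1 y2 y3 wx wy r M :
  0 < M -> x1 <> x2 -> x1 <> x3 -> x2 <> x3 ->
  (DD x1 x2 x3 y1 y2 y3)^2 <= M^2 * QQ x1 x2 x3 ->
  (x1-wx)^2 + (y1-wy)^2 = r^2 ->
  (x2-wx)^2 + (y2-wy)^2 = r^2 ->
  (x3-wx)^2 + (y3-wy)^2 = r^2 ->
  (/ r)^2 <= 8 * M^2.
Proof.
  intros HM n12 n13 n23 HB E1 E2 E3.
  set (ux := x2-x1). set (uy := y2-y1). set (vx := x3-x1). set (vy := y3-y1).
  set (px := wx-x1). set (py := wy-y1).
  assert (P1 : px^2+py^2 = r^2) by (rewrite <- E1; unfold px, py; ring).
  assert (EU : ux^2+uy^2 = 2*(ux*px+uy*py)).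
  { assert (E : (ux-px)^2+(uy-py)^2 = r^2) by (rewrite <- E2; unfold ux,uy,px,py; ring). nra. }
  assert (EV : vx^2+vy^2 = 2*(vx*px+vy*py)).
  { assert (E : (vx-px)^2+(vy-py)^2 = r^2) by (rewrite <- E3; unfold vx,vy,px,py; ring). nra. }
  set (D := ux*vy - vx*uy).
  assert (HDD : DD x1 x2 x3 y1 y2 y3 = D) by (unfold DD, D, ux, uy, vx, vy; ring).
  assert (e1 : 2*px*D = (ux^2+uy^2)*vy - (vx^2+vy^2)*uy) by (rewrite EU, EV; unfold D; ring).
  assert (e2 : 2*py*D = (vx^2+vy^2)*ux - (ux^2+uy^2)*vx) by (rewrite EU, EV; unfold D; ring).
  assert (KEY : 4*D^2*r^2 = (ux^2+uy^2)*(vx^2+vy^2)*((ux-vx)^2+(uy-vy)^2)).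
  { rewrite <- P1. replace (4*D^2*(px^2+py^2)) with ((2*px*D)^2 + (2*py*D)^2) by ring.
    rewrite e1, e2. ring. }
  assert (Q1 : 0 < ux^2) by (unfold ux; apply pow2_gt_0; lra).
  assert (Q2 : 0 < vx^2) by (unfold vx; apply pow2_gt_0; lra).
  assert (Q3 : 0 < (ux-vx)^2) by (unfold ux, vx; apply pow2_gt_0; lra).
  assert (HQ : QQ x1 x2 x3 = ux^2*vx^2*(ux-vx)^2) by (unfold QQ, ux, vx; ring).
  set (P := (ux^2+uy^2)*(vx^2+vy^2)*((ux-vx)^2+(uy-vy)^2)) in *.
  set (Q := ux^2*vx^2*(ux-vx)^2) in *.
  assert (QP : Q <= P).
  { unfold P, Q.
    assert (a1 : ux^2 <= ux^2+uy^2) by (pose proof (pow2_ge_0 uy); lra).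
    assert (a2 : vx^2 <= vx^2+vy^2) by (pose proof (pow2_ge_0 vy); lra).
    assert (a3 : (ux-vx)^2 <= (ux-vx)^2+(uy-vy)^2) by (pose proof (pow2_ge_0 (uy-vy)); lra).
    apply Rmult_le_compat; try lra.
    - apply Rmult_le_pos; lra.
    - apply Rmult_le_compat; lra. }
  assert (Qpos : 0 < Q) by (unfold Q; apply Rmult_lt_0_compat; [apply Rmult_lt_0_compat|]; auto).
  rewrite HDD, HQ in HB.
  assert (r2 : 0 < r^2).
  { destruct (Rle_lt_dec (r^2) 0) as [h|h]; auto.
    assert (r^2 = 0) by (pose proof (pow2_ge_0 r); lra).
    rewrite H in KEY. nra. }
  assert (rn : r <> 0) by (intro; subst; simpl in r2; lra).
  (* P = 4 D^2 r^2 <= 4 M^2 Q r^2 <= 4 M^2 P r^2 *)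
  assert (S : P <= 4*M^2*P*r^2).
  { rewrite <- KEY at 1.
    apply Rle_trans with (4*M^2*Q*r^2).
    - replace (4*D^2*r^2) with (4*r^2*D^2) by ring.
      replace (4*M^2*Q*r^2) with (4*r^2*(M^2*Q)) by ring.
      apply Rmult_le_compat_l; [lra|auto].
    - replace (4*M^2*Q*r^2) with ((4*M^2*r^2)*Q) by ring.
      replace (4*M^2*P*r^2) with ((4*M^2*r^2)*P) by ring.
      apply Rmult_le_compat_l; auto. apply Rmult_le_pos; [|lra].
      apply Rmult_le_pos; [lra| apply pow2_ge_0]. }
  assert (S2 : 1 <= 4*M^2*r^2).
  { apply Rmult_le_reg_l with P; [lra|]. nra. }
  rewrite <- Rinv_pow by auto.
  apply Rmult_le_reg_r with (r^2); auto.
  rewrite Rinv_l by lra. pose proof (pow2_ge_0 M). nra.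
Qed.

Lemma cmod_sq (z w : C) r : Cmod (z - w) = r ->
  (fst z - fst w)^2 + (snd z - snd w)^2 = r^2.
Proof.
  destruct z as [a b], w as [c d]. intro H. rewrite <- H. unfold Cmod.
  rewrite pow2_sqrt.
  - simpl. ring.
  - apply Rplus_le_le_0_compat; apply pow2_ge_0.
Qed.

Theorem lemma1p5 (a b : Rbar) (A : R -> R) (M : R) :
  0 < M ->
  (forall x, in_open_interval a b x -> ex_derive A x) ->
  (forall x y, in_open_interval a b x -> in_open_interval a b y ->
     Rabs (Derive A x - Derive A y) <= M * Rabs (x - y)) ->
  forall z1 z2 z3 : C,
    (exists x, in_open_interval a b x /\ z1 = (x, A x)) ->
    (exists x, in_open_interval a b x /\ z2 = (x, A x)) ->
    (exists x, in_open_interval a b x /\ z3 = (x, A x)) ->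
    z1 <> z2 -> z1 <> z3 -> z2 <> z3 ->
    (menger_curvature z1 z2 z3) ^ 2 <= 8 * M ^ 2.
Proof.
  intros HM HD HL z1 z2 z3 [x1 [J1 ->]] [x2 [J2 ->]] [x3 [J3 ->]] n12 n13 n23.
  assert (m12 : x1 <> x2) by (intro e; subst; apply n12; reflexivity).
  assert (m13 : x1 <> x3) by (intro e; subst; apply n13; reflexivity).
  assert (m23 : x2 <> x3) by (intro e; subst; apply n23; reflexivity).
  unfold menger_curvature.
  destruct (excluded_middle_informative _) as [Hc|Hc].
  { simpl. pose proof (pow2_ge_0 M). nra. }
  assert (HD0 : DD x1 x2 x3 (A x1) (A x2) (A x3) <> 0).
  { intro H0. apply Hc. unfold DD in H0.
    exists (x1, A x1), (x2 - x1, A x2 - A x1). split.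
    { intro h. apply (f_equal fst) in h. simpl in h. lra. }
    split; [exists 0|split; [exists 1| exists ((x3-x1)/(x2-x1))]];
      apply injective_projections; simpl; try ring.
    - field. lra.
    - assert (x2 - x1 <> 0) by lra. field_simplify_eq; auto. lra. }
  set (ux := x2-x1) in *. set (uy := A x2 - A x1). set (vx := x3-x1). set (vy := A x3 - A x1).
  set (D := DD x1 x2 x3 (A x1) (A x2) (A x3)) in *.
  assert (HDe : D = ux*vy - vx*uy) by (unfold D, DD, ux, uy, vx, vy; ring).
  set (U := ux^2+uy^2). set (V := vx^2+vy^2).
  set (px := (U*vy - V*uy)/(2*D)). set (py := (V*ux - U*vx)/(2*D)).
  assert (Hex : exists r, is_circumradius (x1, A x1) (x2, A x2) (x3, A x3) r).
  { pose (w0 := (x1 + px, A x1 + py) : C).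
    exists (Cmod (Cminus (x1, A x1) w0)).
    exists w0. unfold w0. split; [reflexivity|split].
    - unfold Cmod. f_equal. simpl. unfold px, py, U, V. rewrite HDe.
      rewrite HDe in HD0. unfold ux, uy, vx, vy in *. field. auto.
    - unfold Cmod. f_equal. simpl. unfold px, py, U, V. rewrite HDe.
      rewrite HDe in HD0. unfold ux, uy, vx, vy in *. field. auto. }
  pose proof (epsilon_spec (inhabits 0) _ Hex) as Hr.
  fold (circumradius (x1, A x1) (x2, A x2) (x3, A x3)) in Hr.
  destruct Hr as [w [E1 [E2 E3]]].
  apply cmod_sq in E1, E2, E3. simpl in E1, E2, E3.
  apply (circle_alg x1 x2 x3 (A x1) (A x2) (A x3) (fst w) (snd w)); auto.
  apply (all_bound a b A M); auto.
Qed.
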